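(* Let $V,W$ be finite-dimensional Hermitian vector spaces, $\tilde W=V\oplus V\oplus W$, and let $B_1,B_2\in\mathrm{End}(V)$, $i\in\mathrm{Hom}(W,V)$, $j\in\mathrm{Hom}(V,W)$ satisfy $[B_1,B_2]+ij=0$ and $[B_1,B_1^\dagger]+[B_2,B_2^\dagger]+ii^\dagger-j^\dagger j=0$. Let $\alpha_{\rm I}:V\otimes\mathfrak{M}^{\rm I}_q\to\tilde W\otimes\mathfrak{M}^{\rm I}_q$ and $\beta_{\rm I}:\tilde W\otimes\mathfrak{M}^{\rm I}_q\to V\otimes\mathfrak{M}^{\rm I}_q$ be the right-linear maps $$\alpha_{\rm I}=\begin{pmatrix}B_1\otimes 1-1\otimes x_{21'}\\ B_2\otimes1-1\otimes x_{22'}\\ j\otimes 1\end{pmatrix},\qquad \beta_{\rm I}=\begin{pmatrix}-B_2\otimes1+1\otimes x_{22'} & B_1\otimes1-1\otimes x_{21'} & i\otimes1\end{pmatrix}.$$ Then (1) $\alpha_{\rm I}$ is injective; (2) $\beta_{\rm I}$ is surjective if and only if $(B_1,B_2,i,j)$ is stable.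
   Context: $\mathfrak{M}^{\rm I}_q$ is the algebra generated by $x_{11'},x_{12'},x_{21'},x_{22'}$ subject to $x_{11'}x_{12'}=x_{12'}x_{11'}$, $x_{21'}x_{22'}=x_{22'}x_{21'}$, $[x_{11'},x_{22'}]+[x_{21'},x_{12'}]=0$, $x_{11'}x_{21'}=q^{-2}x_{21'}x_{11'}$, $x_{12'}x_{22'}=q^{-2}x_{22'}x_{12'}$, $x_{21'}x_{12'}=q^2x_{12'}x_{21'}$, with $q>0$ real. For a linear map $A$ and $x\in\mathfrak{M}^{\rm I}_q$, $A\otimes x$ is the right-linear map $v\otimes f\mapsto Av\otimes xf$. $(B_1,B_2,i,j)$ is stable if no proper subspace $S\subsetneq V$ satisfies $B_k(S)\subset S$ ($k=1,2$) and $i(W)\subset S$. *)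

(* Defs.v *)
From HB Require Import structures.
From mathcomp Require Import all_boot all_order all_algebra.
Set Implicit Arguments. Unset Strict Implicit. Unset Printing Implicit Defensive.
Import Order.TTheory GRing.Theory Num.Theory.
Local Open Scope ring_scope.

(* An element is a finite formal linear combination of words, i.e. a list of
   (coefficient, word); two lists denote the same element iff [coef] agrees. *)
Definition word := seq 'I_4.
Definition fpoly (C : numClosedFieldType) := seq (C * word).

Section FreeAlg.
Variable C : numClosedFieldType.

Definition coef (p : fpoly C) (w : word) : C :=
  \sum_(t <- p | t.2 == w) t.1.

Definition padd (p r : fpoly C) : fpoly C := p ++ r.
Definition pscale (c : C) (p : fpoly C) : fpoly C := [seq (c * t.1, t.2) | t <- p].
Definition popp (p : fpoly C) : fpoly C := pscale (-1) p.
Definition psub (p r : fpoly C) : fpoly C := padd p (popp r).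
Definition pmul (p r : fpoly C) : fpoly C :=
  [seq (a.1 * b.1, a.2 ++ b.2) | a <- p, b <- r].
Definition pword (w : word) : fpoly C := [:: (1, w)].
Definition pX (k : 'I_4) : fpoly C := pword [:: k].

Definition x11 : 'I_4 := @Ordinal 4 0 isT.
Definition x12 : 'I_4 := @Ordinal 4 1 isT.
Definition x21 : 'I_4 := @Ordinal 4 2 isT.
Definition x22 : 'I_4 := @Ordinal 4 3 isT.

Definition comm2 (a b : 'I_4) : fpoly C := psub (pword [:: a; b]) (pword [:: b; a]).

(* The six defining relations of M^I_q (each as "lhs - rhs"). *)
Definition relI (q : C) (k : 'I_6) : fpoly C :=
  match val k with
  | 0 => comm2 x11 x12
  | 1 => comm2 x21 x22
  | 2 => padd (comm2 x11 x22) (comm2 x21 x12)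
  | 3 => psub (pword [:: x11; x21]) (pscale (q ^- 2) (pword [:: x21; x11]))
  | 4 => psub (pword [:: x12; x22]) (pscale (q ^- 2) (pword [:: x22; x12]))
  | _ => psub (pword [:: x21; x12]) (pscale (q ^+ 2) (pword [:: x12; x21]))
  end.

Definition ideal_elt (q : C) (s : seq (C * word * 'I_6 * word)) : fpoly C :=
  flatten [seq pscale t.1.1.1 (pmul (pmul (pword t.1.1.2) (relI q t.1.2)) (pword t.2))
          | t <- s].

(* p lies in the two-sided ideal generated by the relations, i.e. p = 0 in M^I_q. *)
Definition inIdeal (q : C) (p : fpoly C) : Prop :=
  exists s, forall w, coef p w = coef (ideal_elt q s) w.

Definition Meq (q : C) (p r : fpoly C) : Prop := inIdeal q (psub p r).

(* (A (x) 1) applied to a vector: v (x) f |-> A v (x) f, A acting on columns. *)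
Definition mact m n (A : 'M[C]_(m, n)) (f : 'I_n -> fpoly C) : 'I_m -> fpoly C :=
  fun a => flatten [seq pscale (A a k) (f k) | k <- enum 'I_n].

(* (1 (x) x) applied to a vector: v (x) f |-> v (x) x f. *)
Definition xact n (k : 'I_4) (f : 'I_n -> fpoly C) : 'I_n -> fpoly C :=
  fun a => pmul (pX k) (f a).

Definition vsub n (f g : 'I_n -> fpoly C) : 'I_n -> fpoly C := fun a => psub (f a) (g a).
Definition vadd n (f g : 'I_n -> fpoly C) : 'I_n -> fpoly C := fun a => padd (f a) (g a).

(* alpha_I : V (x) M -> (V + V + W) (x) M, the target written as a triple. *)
Definition alphaI n d (B1 B2 : 'M[C]_n) (j : 'M[C]_(d, n)) (f : 'I_n -> fpoly C) :
  (('I_n -> fpoly C) * ('I_n -> fpoly C) * ('I_d -> fpoly C)) :=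
  (vsub (mact B1 f) (xact x21 f), vsub (mact B2 f) (xact x22 f), mact j f).

Definition betaI n d (B1 B2 : 'M[C]_n) (i : 'M[C]_(n, d))
  (g : ('I_n -> fpoly C) * ('I_n -> fpoly C) * ('I_d -> fpoly C)) : 'I_n -> fpoly C :=
  vadd (vadd (vsub (xact x22 g.1.1) (mact B2 g.1.1))
             (vsub (mact B1 g.1.2) (xact x21 g.1.2)))
       (mact i g.2).

(* Hermitian adjoint w.r.t. the standard inner products on C^n, C^d. *)
Definition dag m n (A : 'M[C]_(m, n)) : 'M[C]_(n, m) := (map_mx Num.conj A)^T.

(* Subspaces are row spaces (mxalgebra); a column vector
   v is represented by the row v^T, so B v corresponds to v^T B^T. *)
Definition stable n d (B1 B2 : 'M[C]_n) (i : 'M[C]_(n, d)) : Prop :=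
  ~ exists S : 'M[C]_n,
      [/\ (S *m B1^T <= S)%MS, (S *m B2^T <= S)%MS, (i^T <= S)%MS & (\rank S < n)%N].

End FreeAlg.

(* Main.v *)
Require Import Defs.
From HB Require Import structures.
From mathcomp Require Import all_boot all_order all_algebra.
From Stdlib Require Import FunctionalExtensionality.
Set Implicit Arguments. Unset Strict Implicit. Unset Printing Implicit Defensive.
Import Order.TTheory GRing.Theory Num.Theory.
Local Open Scope ring_scope.

Section Coef.
Variable C : numClosedFieldType.
Implicit Types p r : fpoly C.

Lemma coef_nil w : coef ([::] : fpoly C) w = 0.
Proof. by rewrite /coef big_nil. Qed.

Lemma coef_cons (t : C * word) p w :
  coef (t :: p) w = (if t.2 == w then t.1 else 0) + coef p w.
Proof. by rewrite /coef big_cons; case: ifP; rewrite ?add0r. Qed.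

Lemma coef_cat p r w : coef (p ++ r) w = coef p w + coef r w.
Proof. by rewrite /coef big_cat. Qed.

Lemma coef_pscale c p w : coef (pscale c p) w = c * coef p w.
Proof.
rewrite /coef /pscale big_map mulr_sumr big_mkcond [RHS]big_mkcond /=.
by apply: eq_bigr => t _; case: ifP; rewrite ?mulr0.
Qed.

Lemma coef_pword u w : coef (pword C u) w = (u == w)%:R.
Proof. by rewrite /pword coef_cons coef_nil addr0 /=; case: ifP. Qed.

Lemma coef_psub p r w : coef (psub p r) w = coef p w - coef r w.
Proof. by rewrite /psub /padd /popp coef_cat coef_pscale mulN1r. Qed.

Lemma coef_flatten (l : seq (fpoly C)) w :
  coef (flatten l) w = \sum_(p <- l) coef p w.
Proof.
elim: l => [|p l IH]; first by rewrite big_nil coef_nil.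
by rewrite /= coef_cat IH big_cons.
Qed.

Definition Lk (k : 'I_4) p : fpoly C := [seq (t.1, k :: t.2) | t <- p].

Definition headc (k : 'I_4) (f : word -> C) (w : word) : C :=
  if w is k' :: w' then (if k' == k then f w' else 0) else 0.

Lemma coef_Lk k p w : coef (Lk k p) w = headc k (coef p) w.
Proof.
rewrite /coef /Lk big_map /headc; case: w => [|k' w'] /=.
  by rewrite big1.
case: eqP => [->|nk]; first by apply: eq_bigl => t; rewrite eqseq_cons eqxx.
by rewrite big1 // => t; rewrite eqseq_cons eq_sym => /andP[/eqP].
Qed.

Lemma pmulX k p : pmul (pX C k) p = [seq (1 * b.1, [:: k] ++ b.2) | b <- p].
Proof. by rewrite /pmul /pX /pword /= cats0. Qed.

Lemma coef_pmulX k p w : coef (pmul (pX C k) p) w = headc k (coef p) w.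
Proof.
rewrite pmulX -coef_Lk /Lk; elim: p => [|t p IH] //=.
by rewrite !coef_cons IH mul1r.
Qed.

Lemma coef_mact m n (A : 'M[C]_(m, n)) (f : 'I_n -> fpoly C) a w :
  coef (mact A f a) w = \sum_k A a k * coef (f k) w.
Proof.
rewrite /mact coef_flatten big_map big_enum /=.
by apply: eq_bigr => k _; rewrite coef_pscale.
Qed.

End Coef.

Section Ideal.
Variable C : numClosedFieldType.
Variable q : C.
Implicit Types p r : fpoly C.

Lemma pmul_pword_l u p : pmul (pword C u) p = [seq (1 * b.1, u ++ b.2) | b <- p].
Proof. by rewrite /pmul /pword /= cats0. Qed.

Lemma pmul_pword_r p v : pmul p (pword C v) = [seq (a.1 * 1, a.2 ++ v) | a <- p].
Proof. by rewrite /pmul /pword; elim: p => //= a p ->. Qed.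

Definition Ctx (u v : word) p : fpoly C := [seq (b.1, u ++ b.2 ++ v) | b <- p].

Lemma ideal_cat s1 s2 : ideal_elt q (s1 ++ s2) = ideal_elt q s1 ++ ideal_elt q s2.
Proof. by rewrite /ideal_elt map_cat flatten_cat. Qed.

Lemma coef_ideal1 c u k v w :
  coef (ideal_elt q [:: (c, u, k, v)]) w = c * coef (Ctx u v (relI q k)) w.
Proof.
rewrite /ideal_elt /= cats0 coef_pscale pmul_pword_l pmul_pword_r -map_comp.
congr (_ * _); rewrite /coef /Ctx !big_map; apply: eq_big => b /=.
  by rewrite catA.
by rewrite mulr1 mul1r.
Qed.

Definition sclt (c : C) (t : C * word * 'I_6 * word) := (c * t.1.1.1, t.1.1.2, t.1.2, t.2).

Lemma coef_ideal_scale c s w :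
  coef (ideal_elt q (map (sclt c) s)) w = c * coef (ideal_elt q s) w.
Proof.
rewrite /ideal_elt !coef_flatten !big_map mulr_sumr; apply: eq_bigr => t _.
by rewrite !coef_pscale mulrA.
Qed.

Definition pret (k : 'I_4) (t : C * word * 'I_6 * word) := (t.1.1.1, k :: t.1.1.2, t.1.2, t.2).

Lemma Lk_ideal k s : Lk k (ideal_elt q s) = ideal_elt q (map (pret k) s).
Proof.
rewrite /ideal_elt /Lk map_flatten -!map_comp; congr flatten; apply: eq_map => t /=.
by rewrite /pscale !pmul_pword_l !pmul_pword_r -!map_comp.
Qed.

Definition E p r := exists s, forall w, coef p w = coef r w + coef (ideal_elt q s) w.

Lemma E_coef p r : (forall w, coef p w = coef r w) -> E p r.
Proof. by move=> h; exists [::] => w; rewrite h /ideal_elt /= coef_nil addr0. Qed.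

Lemma E_refl p : E p p.
Proof. exact: E_coef. Qed.

Lemma E_trans p r t : E p r -> E r t -> E p t.
Proof.
move=> [s1 h1] [s2 h2]; exists (s2 ++ s1) => w.
by rewrite h1 h2 ideal_cat coef_cat addrA.
Qed.

Lemma E_sym p r : E p r -> E r p.
Proof.
move=> [s h]; exists (map (sclt (-1)) s) => w.
by rewrite coef_ideal_scale h mulN1r addrK.
Qed.

Lemma E_add p1 r1 p2 r2 : E p1 r1 -> E p2 r2 -> E (p1 ++ p2) (r1 ++ r2).
Proof.
move=> [s1 h1] [s2 h2]; exists (s1 ++ s2) => w.
rewrite !coef_cat h1 h2 ideal_cat coef_cat.
by rewrite -!addrA; congr (_ + _); rewrite addrCA.
Qed.

Lemma E_scale c p r : E p r -> E (pscale c p) (pscale c r).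
Proof.
move=> [s h]; exists (map (sclt c) s) => w.
by rewrite coef_ideal_scale !coef_pscale h mulrDr.
Qed.

Lemma E_Lk k p r : E p r -> E (Lk k p) (Lk k r).
Proof.
move=> [s h]; exists (map (pret k) s) => w.
rewrite -Lk_ideal !coef_Lk /headc; case: w => [|k' w]; first by rewrite addr0.
by case: ifP; rewrite ?h ?addr0.
Qed.

Lemma E_rel c u k v p r :
  (forall w, coef p w = coef r w + c * coef (Ctx u v (relI q k)) w) -> E p r.
Proof. by move=> h; exists [:: (c, u, k, v)] => w; rewrite coef_ideal1 h. Qed.

Lemma E_coefl p p' r : (forall w, coef p w = coef p' w) -> E p' r -> E p r.
Proof. by move=> h; apply: E_trans; apply: E_coef. Qed.

Lemma E_coefr p r r' : (forall w, coef r w = coef r' w) -> E p r' -> E p r.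
Proof. by move=> h e; apply: E_trans e _; apply: E_coef => w; rewrite h. Qed.

Lemma inIdeal_E p : inIdeal q p <-> E p [::].
Proof.
split=> [[s h]|[s h]]; exists s => w; rewrite h //.
  by rewrite coef_nil add0r.
by rewrite coef_nil add0r.
Qed.

Lemma Meq_E p r : Meq q p r <-> E p r.
Proof.
split=> [[s h]|[s h]]; exists s => w.
  by move: (h w); rewrite coef_psub => <-; rewrite addrC subrK.
by rewrite coef_psub h addrC addKr.
Qed.

Lemma Ctx_cat u v p r : Ctx u v (p ++ r) = Ctx u v p ++ Ctx u v r.
Proof. by rewrite /Ctx map_cat. Qed.
Lemma Ctx_pscale u v c p : Ctx u v (pscale c p) = pscale c (Ctx u v p).
Proof. by rewrite /Ctx /pscale -!map_comp. Qed.
Lemma Ctx_pword u v m : Ctx u v (pword C m) = pword C (u ++ m ++ v).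
Proof. by []. Qed.

End Ideal.

From mathcomp Require Import ring.

Section Reduce.
Variable C : numClosedFieldType.
Variable q : C.
Hypothesis qn0 : q != 0.
Local Notation pw := (pword C).
Local Notation r := (q ^+ 2).
Local Notation ri := (q ^- 2).
Local Notation E := (E q).

Lemma rri : r * ri = 1.
Proof. by rewrite mulfV // expf_neq0. Qed.



Lemma relI0 : relI q (@Ordinal 6 0 isT) = comm2 C x11 x12. Proof. by []. Qed.
Lemma relI1 : relI q (@Ordinal 6 1 isT) = comm2 C x21 x22. Proof. by []. Qed.
Lemma relI2 : relI q (@Ordinal 6 2 isT) = padd (comm2 C x11 x22) (comm2 C x21 x12). Proof. by []. Qed.
Lemma relI3 : relI q (@Ordinal 6 3 isT) = psub (pword C [:: x11; x21]) (pscale (q ^- 2) (pword C [:: x21; x11])). Proof. by []. Qed.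
Lemma relI4 : relI q (@Ordinal 6 4 isT) = psub (pword C [:: x12; x22]) (pscale (q ^- 2) (pword C [:: x22; x12])). Proof. by []. Qed.
Lemma relI5 : relI q (@Ordinal 6 5 isT) = psub (pword C [:: x21; x12]) (pscale (q ^+ 2) (pword C [:: x12; x21])). Proof. by []. Qed.

Ltac relco := move=> w; rewrite ?(relI0, relI1, relI2, relI3, relI4, relI5) /comm2 /psub /padd /popp
   ?(Ctx_cat, Ctx_pscale, Ctx_pword) ?(coef_cat, coef_pscale, coef_pword) /=.

Lemma R5 P X : E (pw (P ++ [:: x21, x12 & X])) (pscale r (pw (P ++ [:: x12, x21 & X]))).
Proof. apply: (@E_rel _ _ 1 P (@Ordinal 6 5 isT) X); relco; ring. Qed.

Lemma R1 P X : E (pw (P ++ [:: x22, x21 & X])) (pw (P ++ [:: x21, x22 & X])).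
Proof. apply: (@E_rel _ _ (-1) P (@Ordinal 6 1 isT) X); relco; ring. Qed.

Lemma R4 P X : E (pw (P ++ [:: x22, x12 & X])) (pscale r (pw (P ++ [:: x12, x22 & X]))).
Proof.
apply: (@E_rel _ _ (- r) P (@Ordinal 6 4 isT) X); relco.
have h := rri; set a := (_ == w)%:R; set b := (_ == w)%:R.
by field.
Qed.

Lemma R0 P X : E (pw (P ++ [:: x11, x12 & X])) (pw (P ++ [:: x12, x11 & X])).
Proof. apply: (@E_rel _ _ 1 P (@Ordinal 6 0 isT) X); relco; ring. Qed.

Lemma R3 P X : E (pw (P ++ [:: x11, x21 & X])) (pscale ri (pw (P ++ [:: x21, x11 & X]))).
Proof. apply: (@E_rel _ _ 1 P (@Ordinal 6 3 isT) X); relco; ring. Qed.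

Lemma R2 P X : E (pw (P ++ [:: x11, x22 & X]))
  (pw (P ++ [:: x22, x11 & X]) ++ pscale (-1) (pw (P ++ [:: x21, x12 & X]))
    ++ pw (P ++ [:: x12, x21 & X])).
Proof. apply: (@E_rel _ _ 1 P (@Ordinal 6 2 isT) X); relco; ring. Qed.


Lemma E_sc c d p p' : E p (pscale d p') -> E (pscale c p) (pscale (c * d) p').
Proof.
move=> e; apply: E_coefr (E_scale c e) => w.
by rewrite !coef_pscale mulrA.
Qed.

Lemma nseq_rcons (x : 'I_4) b s : nseq b x ++ x :: s = x :: nseq b x ++ s.
Proof. by elim: b => //= b ->. Qed.

Lemma RV a P X : E (pw (P ++ x21 :: nseq a x12 ++ X)) (pscale (r ^+ a) (pw (P ++ nseq a x12 ++ x21 :: X))).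
Proof.
elim: a P => [|a IH] P.
  by apply: E_coef => w; rewrite coef_pscale expr0 mul1r.
apply: E_trans (R5 P (nseq a x12 ++ X)) _.
have := E_sc r (IH (rcons P x12)); rewrite !cat_rcons -exprS; exact.
Qed.

Lemma RVb b P X : E (pw (P ++ nseq b x21 ++ x12 :: X)) (pscale (r ^+ b) (pw (P ++ x12 :: nseq b x21 ++ X))).
Proof.
elim: b P => [|b IH] P.
  by apply: E_coef => w; rewrite coef_pscale expr0 mul1r.
have := IH (rcons P x21); rewrite !cat_rcons => e.
apply: E_trans e _; rewrite [r ^+ b.+1]exprSr; apply: E_sc; exact: R5.
Qed.

Lemma RW1 b P X : E (pw (P ++ x22 :: nseq b x21 ++ X)) (pw (P ++ nseq b x21 ++ x22 :: X)).
Proof.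
elim: b P => [|b IH] P; first exact: E_refl.
apply: E_trans (R1 P (nseq b x21 ++ X)) _.
by have := IH (rcons P x21); rewrite !cat_rcons.
Qed.

Lemma RW2 a P X : E (pw (P ++ x22 :: nseq a x12 ++ X)) (pscale (r ^+ a) (pw (P ++ nseq a x12 ++ x22 :: X))).
Proof.
elim: a P => [|a IH] P.
  by apply: E_coef => w; rewrite coef_pscale expr0 mul1r.
apply: E_trans (R4 P (nseq a x12 ++ X)) _.
have := E_sc r (IH (rcons P x12)); rewrite !cat_rcons -exprS; exact.
Qed.

Lemma RW a b P X : E (pw (P ++ x22 :: nseq a x12 ++ nseq b x21 ++ X))
   (pscale (r ^+ a) (pw (P ++ nseq a x12 ++ nseq b x21 ++ x22 :: X))).
Proof.
apply: E_trans (RW2 a P (nseq b x21 ++ X)) _; apply: E_scale.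
by have := RW1 b (P ++ nseq a x12) X; rewrite -!catA.
Qed.

Lemma RZ1 a P X : E (pw (P ++ x11 :: nseq a x12 ++ X)) (pw (P ++ nseq a x12 ++ x11 :: X)).
Proof.
elim: a P => [|a IH] P; first exact: E_refl.
apply: E_trans (R0 P (nseq a x12 ++ X)) _.
by have := IH (rcons P x12); rewrite !cat_rcons.
Qed.

Lemma RZ2 b P X : E (pw (P ++ x11 :: nseq b x21 ++ X)) (pscale (ri ^+ b) (pw (P ++ nseq b x21 ++ x11 :: X))).
Proof.
elim: b P => [|b IH] P.
  by apply: E_coef => w; rewrite coef_pscale expr0 mul1r.
apply: E_trans (R3 P (nseq b x21 ++ X)) _.
have := E_sc ri (IH (rcons P x21)); rewrite !cat_rcons -exprS; exact.
Qed.

Lemma RZ3base P X : E (pw (P ++ [:: x11, x22 & X]))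
  (pw (P ++ [:: x22, x11 & X]) ++ pscale (1 - r) (pw (P ++ [:: x12, x21 & X]))).
Proof.
apply: E_trans (R2 P X) _.
apply: E_trans (E_add (E_refl q _) (E_add (E_scale (-1) (R5 P X)) (E_refl q _))) _.
apply: E_coef => w; rewrite !(coef_cat, coef_pscale); ring.
Qed.

Lemma RZ3 c P X : E (pw (P ++ x11 :: nseq c.+1 x22 ++ X))
  (pw (P ++ nseq c.+1 x22 ++ x11 :: X) ++ pscale (1 - r ^+ c.+1) (pw (P ++ [:: x12, x21 & nseq c x22 ++ X]))).
Proof.
elim: c P => [|c IH] P; first exact: RZ3base.
apply: E_trans (RZ3base P (nseq c.+1 x22 ++ X)) _.
have e1 := IH (rcons P x22); rewrite !cat_rcons in e1.
have e2 := RW 1 1 P (nseq c x22 ++ X).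
apply: E_trans (E_add e1 (E_refl q _)) _.
apply: E_trans (E_add (E_add (E_refl q _) (E_scale _ e2)) (E_refl q _)) _.
apply: E_coef => w; rewrite [r ^+ c.+2]exprS !(coef_cat, coef_pscale, coef_pword) /= expr1; ring.
Qed.

End Reduce.

Section NF.
Variable C : numClosedFieldType.
Variable q : C.
Hypothesis qn0 : q != 0.
Local Notation pw := (pword C).
Local Notation r := (q ^+ 2).
Local Notation ri := (q ^- 2).
Local Notation E := (E q).

Definition mono (m : nat * nat * nat * nat) : word :=
  nseq m.1.1.1 x12 ++ nseq m.1.1.2 x21 ++ nseq m.1.2 x22 ++ nseq m.2 x11.

Definition nf (N : seq (C * (nat * nat * nat * nat))) : fpoly C :=
  [seq (t.1, mono t.2) | t <- N].

Lemma coef_nf_cons t N w :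
  coef (nf (t :: N)) w = t.1 * (mono t.2 == w)%:R + coef (nf N) w.
Proof. by rewrite /nf /= coef_cons; case: ifP; rewrite ?mulr1 ?mulr0. Qed.

Lemma nf_cat N1 N2 : nf (N1 ++ N2) = nf N1 ++ nf N2.
Proof. by rewrite /nf map_cat. Qed.

Lemma pscale_nf c N : pscale c (nf N) = nf [seq (c * s.1, s.2) | s <- N].
Proof. by rewrite /nf /pscale -!map_comp. Qed.

Lemma E_pw1 c m p : E p (pscale c (pw (mono m))) -> E p (nf [:: (c, m)]).
Proof.
move=> e; apply: E_coefr e => w.
by rewrite coef_nf_cons /nf coef_nil addr0 coef_pscale coef_pword.
Qed.

Lemma gen_mono k m : exists N, E (pw (k :: mono m)) (nf N).
Proof.
case: m => [[[a b] c] e].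
case: k => [[|[|[|[|k]]]] hk] //.
-
  have -> : Ordinal hk = x11 by apply: val_inj.
  have e1 := E_trans (RZ1 q a [::] (nseq b x21 ++ nseq c x22 ++ nseq e x11))
                     (RZ2 q b (nseq a x12) (nseq c x22 ++ nseq e x11)).
  case: c e1 => [|c] e1.
    exists [:: (ri ^+ b, (a, b, 0%N, e.+1))]; exact: E_pw1.
  have e2 := RZ3 qn0 c (nseq a x12 ++ nseq b x21) (nseq e x11).
  rewrite -!catA in e2.
  have e3 := RVb q b (nseq a x12) (x21 :: nseq c x22 ++ nseq e x11).
  exists [:: (ri ^+ b, (a, b, c.+1, e.+1)); (ri ^+ b * ((1 - r ^+ c.+1) * r ^+ b), (a.+1, b.+1, c, e))].
  apply: E_trans e1 _.
  apply: E_trans (E_scale (ri ^+ b) e2) _.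
  apply: E_trans (E_scale (ri ^+ b) (E_add (E_refl q _) (E_scale (1 - r ^+ c.+1) e3))) _.
  apply: E_coef => w.
  rewrite !coef_nf_cons /nf coef_nil addr0 !(coef_cat, coef_pscale, coef_pword) /mono /=.
  rewrite !nseq_rcons; ring.
-
  have -> : Ordinal hk = x12 by apply: val_inj.
  exists [:: (1, (a.+1, b, c, e))]; apply: E_pw1.
  by apply: E_coef => w; rewrite coef_pscale mul1r.
-
  have -> : Ordinal hk = x21 by apply: val_inj.
  exists [:: (r ^+ a, (a, b.+1, c, e))]; apply: E_pw1.
  exact: (RV q a [::] (nseq b x21 ++ nseq c x22 ++ nseq e x11)).
-
  have -> : Ordinal hk = x22 by apply: val_inj.
  exists [:: (r ^+ a, (a, b, c.+1, e))]; apply: E_pw1.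
  exact: (RW qn0 a b [::] (nseq c x22 ++ nseq e x11)).
Qed.

Lemma Lk_nf k N : exists N', E (Lk k (nf N)) (nf N').
Proof.
elim: N => [|t N [N2 e2]]; first by exists [::]; exact: E_refl.
have [N1 e1] := gen_mono k t.2.
exists ([seq (t.1 * s.1, s.2) | s <- N1] ++ N2); rewrite nf_cat -pscale_nf.
apply: E_trans (E_add (E_scale t.1 e1) e2).
apply: E_coef => w; rewrite /= !coef_cons mulr1 //.
Qed.

Lemma word_nf u : exists N, E (pw u) (nf N).
Proof.
elim: u => [|k u [N e]]; first by exists [:: (1, (0, 0, 0, 0)%N)]; exact: E_refl.
have [N' e'] := Lk_nf k N.
exists N'; exact: E_trans (E_Lk k e) e'.
Qed.

Lemma poly_nf p : exists N, E p (nf N).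
Proof.
elim: p => [|t p [N2 e2]]; first by exists [::]; exact: E_refl.
have [N1 e1] := word_nf t.2.
exists ([seq (t.1 * s.1, s.2) | s <- N1] ++ N2); rewrite nf_cat -pscale_nf.
apply: E_trans (E_add (E_scale t.1 e1) e2).
apply: E_coef => w; rewrite /= !coef_cons mulr1 //.
Qed.

End NF.

Section Eval.
Variable C : numClosedFieldType.
Variable q : C.
Variable T : Type.
Variable g : 'I_4 -> (T -> C) -> (T -> C).
Hypothesis gadd : forall k f h, g k (fun x => f x + h x) = (fun x => g k f x + g k h x).
Hypothesis gscale : forall k c f, g k (fun x => c * f x) = (fun x => c * g k f x).

Definition act (w : word) (f : T -> C) : T -> C := foldr (fun k h => g k h) f w.

Lemma act_cat w1 w2 f : act (w1 ++ w2) f = act w1 (act w2 f).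
Proof. by rewrite /act foldr_cat. Qed.

Lemma act_add w f h : act w (fun x => f x + h x) = (fun x => act w f x + act w h x).
Proof. by elim: w => //= k w ->; rewrite gadd. Qed.

Lemma act_scale w c f : act w (fun x => c * f x) = (fun x => c * act w f x).
Proof. by elim: w => //= k w ->; rewrite gscale. Qed.

Lemma act_zero w : act w (fun _ => 0) = (fun _ => 0).
Proof.
have := act_scale w 0 (fun _ => 0); rewrite /=.
have -> : (fun _ : T => 0 * 0) = (fun _ : T => (0 : C)) by apply: functional_extensionality => x; rewrite mul0r.
by move=> ->; apply: functional_extensionality => x; rewrite mul0r.
Qed.

Lemma act_sum (I : Type) w (s : seq I) (F : I -> T -> C) :
  act w (fun x => \sum_(t <- s) F t x) = (fun x => \sum_(t <- s) act w (F t) x).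
Proof.
elim: s => [|t s IH].
  have -> : (fun x : T => \sum_(t <- [::]) F t x) = (fun _ => 0).
    by apply: functional_extensionality => x; rewrite big_nil.
  by rewrite act_zero; apply: functional_extensionality => x; rewrite big_nil.
have -> : (fun x : T => \sum_(t0 <- t :: s) F t0 x) = (fun x => F t x + \sum_(t0 <- s) F t0 x).
  by apply: functional_extensionality => x; rewrite big_cons.
by rewrite act_add IH; apply: functional_extensionality => x; rewrite big_cons.
Qed.

Definition ev (p : fpoly C) (f : T -> C) : T -> C :=
  fun x => \sum_(t <- p) t.1 * act t.2 f x.

Lemma ev_nil f x : ev [::] f x = 0.
Proof. by rewrite /ev big_nil. Qed.

Lemma ev_cat p r f x : ev (p ++ r) f x = ev p f x + ev r f x.
Proof. by rewrite /ev big_cat. Qed.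

Lemma ev_pscale c p f x : ev (pscale c p) f x = c * ev p f x.
Proof. by rewrite /ev /pscale big_map mulr_sumr; apply: eq_bigr => t _; rewrite mulrA. Qed.

Lemma ev_pword u f x : ev (pword C u) f x = act u f x.
Proof. by rewrite /ev /pword big_cons big_nil addr0 mul1r. Qed.

Lemma ev_flatten (l : seq (fpoly C)) f x : ev (flatten l) f x = \sum_(p <- l) ev p f x.
Proof.
elim: l => [|p l IH]; first by rewrite big_nil ev_nil.
by rewrite /= ev_cat IH big_cons.
Qed.

Lemma ev_pmul p r f x : ev (pmul p r) f x = ev p (ev r f) x.
Proof.
rewrite /ev /pmul big_allpairs_dep; apply: eq_bigr => a _.
rewrite (act_sum a.2 r (fun t y => t.1 * act t.2 f y)) mulr_sumr; apply: eq_bigr => b _.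
by rewrite /= act_cat act_scale mulrA.
Qed.

Lemma ev_coef0 s f x : (forall w, coef s w = 0) -> ev s f x = 0.
Proof.
have [n] := ubnP (size s); elim: n s => [//|n IH] [|t s] //=; first by rewrite ev_nil.
rewrite ltnS => hs hc.
rewrite /ev (bigID (fun t0 : C * word => t0.2 == t.2)) /=.
have -> : \sum_(i <- t :: s | i.2 == t.2) i.1 * act i.2 f x =
          \sum_(i <- t :: s | i.2 == t.2) i.1 * act t.2 f x.
  by apply: eq_bigr => i /eqP ->.
rewrite -mulr_suml.
have -> : \sum_(i <- t :: s | i.2 == t.2) i.1 = coef (t :: s) t.2 by [].
rewrite hc mul0r add0r -big_filter.
apply: (IH (filter (fun t0 : C * word => t0.2 != t.2) (t :: s))).
  rewrite /= eqxx /= size_filter; apply: leq_ltn_trans hs; exact: count_size.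
move=> w; rewrite /coef big_filter_cond.
case: (eqVneq w t.2) => [->|nw].
  by rewrite big1 // => i /andP[/negbTE ->].
transitivity (coef (t :: s) w); last exact: hc w.
rewrite /coef; apply: eq_bigl => i.
by case: (eqVneq i.2 w) => [->|]; rewrite ?nw ?andbF ?andbT.
Qed.

Lemma ev_coef p r f x : (forall w, coef p w = coef r w) -> ev p f x = ev r f x.
Proof.
move=> h; apply/eqP; rewrite -subr_eq0; apply/eqP.
have := @ev_coef0 (psub p r) f x; rewrite /psub /padd /popp ev_cat ev_pscale mulN1r.
by apply=> w; rewrite coef_cat coef_pscale mulN1r h subrr.
Qed.

Hypothesis grel : forall k f x, ev (relI q k) f x = 0.

Lemma ev_ideal s f x : ev (ideal_elt q s) f x = 0.
Proof.
rewrite /ideal_elt ev_flatten big_map big1 // => t _.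
rewrite ev_pscale !ev_pmul ev_pword.
have -> : ev (relI q t.1.2) (ev (pword C t.2) f) = (fun _ => 0).
  by apply: functional_extensionality => y; rewrite grel.
by rewrite act_zero mulr0.
Qed.

Lemma ev_E p r f x : E q p r -> ev p f x = ev r f x.
Proof.
move=> [s h]; rewrite (@ev_coef p (r ++ ideal_elt q s)); last by move=> w; rewrite coef_cat.
by rewrite ev_cat ev_ideal addr0.
Qed.

Lemma ev_inIdeal p f x : inIdeal q p -> ev p f x = 0.
Proof. by move=> /inIdeal_E /(ev_E f x) ->; rewrite ev_nil. Qed.

Lemma ev_mact m n (A : 'M[C]_(m, n)) (h : 'I_n -> fpoly C) a f x :
  ev (mact A h a) f x = \sum_k A a k * ev (h k) f x.
Proof.
rewrite /mact ev_flatten big_map big_enum /=.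
by apply: eq_bigr => k _; rewrite ev_pscale.
Qed.

Lemma ev_xact n k (h : 'I_n -> fpoly C) a f x :
  ev (xact k h a) f x = g k (ev (h a) f) x.
Proof. by rewrite /xact ev_pmul /pX ev_pword. Qed.

Lemma ev_vadd n (f1 f2 : 'I_n -> fpoly C) a f x :
  ev (vadd f1 f2 a) f x = ev (f1 a) f x + ev (f2 a) f x.
Proof. by rewrite /vadd /padd ev_cat. Qed.

Lemma ev_vsub n (f1 f2 : 'I_n -> fpoly C) a f x :
  ev (vsub f1 f2 a) f x = ev (f1 a) f x - ev (f2 a) f x.
Proof. by rewrite /vsub /psub /padd /popp ev_cat ev_pscale mulN1r. Qed.

End Eval.

Section Rep.
Variable C : numClosedFieldType.
Variable q : C.
Hypothesis qn0 : q != 0.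
Local Notation r := (q ^+ 2).
Local Notation ri := (q ^- 2).

Definition T4 := (nat * nat * nat * nat)%type.

Definition opU (h : T4 -> C) : T4 -> C := fun m =>
  let: (a, b, c, e) := m in if a is a'.+1 then h (a', b, c, e) else 0.
Definition opV (h : T4 -> C) : T4 -> C := fun m =>
  let: (a, b, c, e) := m in if b is b'.+1 then r ^+ a * h (a, b', c, e) else 0.
Definition opW (h : T4 -> C) : T4 -> C := fun m =>
  let: (a, b, c, e) := m in if c is c'.+1 then r ^+ a * h (a, b, c', e) else 0.
Definition opZ (h : T4 -> C) : T4 -> C := fun m =>
  let: (a, b, c, e) := m in
  (if e is e'.+1 then ri ^+ b * h (a, b, c, e') else 0) +
  (match a, b with a'.+1, b'.+1 => (1 - r ^+ c.+1) * h (a', b', c.+1, e) | _, _ => 0 end).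

Definition gop (k : 'I_4) : (T4 -> C) -> (T4 -> C) :=
  match val k with 0 => opZ | 1 => opU | 2 => opV | _ => opW end.

Lemma gop_add k f h : gop k (fun x => f x + h x) = (fun x => gop k f x + gop k h x).
Proof.
apply: functional_extensionality => [[[[a b] c] e]].
rewrite /gop; case: k => [[|[|[|[|k]]]] hk] //=; rewrite /opZ /opU /opV /opW;
  case: a; case: b; case: c; case: e; intros; rewrite ?addr0 //; ring.
Qed.

Lemma gop_scale k c0 f : gop k (fun x => c0 * f x) = (fun x => c0 * gop k f x).
Proof.
apply: functional_extensionality => [[[[a b] c] e]].
rewrite /gop; case: k => [[|[|[|[|k]]]] hk] //=; rewrite /opZ /opU /opV /opW;
  case: a; case: b; case: c; case: e; intros; rewrite ?mulr0 ?addr0 //; ring.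
Qed.


Lemma gop_rel k f x : ev gop (relI q k) f x = 0.
Proof.
case: x => [[[a b] c] e].
case: k => [[|[|[|[|[|[|k]]]]]] hk] //;
  rewrite /relI /comm2 /psub /padd /popp /= /ev !big_cons big_nil /= /gop /=
     /opZ /opU /opV /opW;
  case: a => [|[|a]]; case: b => [|[|b]]; case: c => [|c]; case: e => [|e];
  rewrite ?exprS ?expr0; try field; try by [].
Qed.


Definition dl (m0 : T4) : T4 -> C := fun m => (m == m0)%:R.

Lemma opZ_dl e : opZ (dl (0, 0, 0, e)%N) = dl (0, 0, 0, e.+1)%N.
Proof.
apply: functional_extensionality => [[[[a b] c] e']].
rewrite /opZ /dl !xpair_eqE.
case: a => [|a]; case: b => [|b]; case: c => [|c]; case: e' => [|e'] /=;
  rewrite ?expr0 ?mul1r ?mul0r ?mulr0 ?add0r ?addr0 //;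
  by rewrite !xpair_eqE /= ?andbF ?andFb /= ?mulr0.
Qed.

Lemma opW_dl c e : opW (dl (0, 0, c, e)%N) = dl (0, 0, c.+1, e)%N.
Proof.
apply: functional_extensionality => [[[[a b] c'] e']].
rewrite /opW /dl !xpair_eqE.
case: a => [|a]; case: b => [|b]; case: c' => [|c'] /=;
  rewrite ?expr0 ?mul1r ?mul0r ?mulr0 //.
Qed.

Lemma opV_dl b c e : opV (dl (0, b, c, e)%N) = dl (0, b.+1, c, e)%N.
Proof.
apply: functional_extensionality => [[[[a b'] c'] e']].
rewrite /opV /dl !xpair_eqE.
case: a => [|a]; case: b' => [|b'] /=; rewrite ?expr0 ?mul1r ?mul0r ?mulr0 //.
Qed.

Lemma opU_dl a b c e : opU (dl (a, b, c, e)%N) = dl (a.+1, b, c, e)%N.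
Proof.
apply: functional_extensionality => [[[[a' b'] c'] e']].
by rewrite /opU /dl !xpair_eqE; case: a' => [|a'] /=.
Qed.

Lemma act_mono m : act gop (mono m) (dl (0, 0, 0, 0)%N) = dl m.
Proof.
case: m => [[[a b] c] e]; rewrite /mono /= !act_cat.
have -> : act gop (nseq e x11) (dl (0, 0, 0, 0)%N) = dl (0, 0, 0, e)%N.
  by elim: e => //= e ->; rewrite /gop /= opZ_dl.
have -> : act gop (nseq c x22) (dl (0, 0, 0, e)%N) = dl (0, 0, c, e)%N.
  by elim: c => //= c ->; rewrite /gop /= opW_dl.
have -> : act gop (nseq b x21) (dl (0, 0, c, e)%N) = dl (0, b, c, e)%N.
  by elim: b => //= b ->; rewrite /gop /= opV_dl.
by elim: a => //= a ->; rewrite /gop /= opU_dl.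
Qed.

Definition Pb (D : nat) (h : T4 -> C) := forall a b c e, (D < b)%N -> h (a, b, c, e) = 0.

Lemma Pb_mon D D' h : (D <= D')%N -> Pb D h -> Pb D' h.
Proof. by move=> le hP a b c e lt; apply: hP; apply: leq_ltn_trans lt. Qed.

Lemma gop_Pb k D h : Pb D h -> Pb D.+1 (gop k h).
Proof.
move=> hP a b c e lt; rewrite /gop; case: k => [[|[|[|[|k]]]] hk] //=.
- rewrite /opZ; rewrite (_ : match e with 0%N => 0 | e'.+1 => _ end = 0); last first.
    by case: e => [|e] //; rewrite hP ?mulr0 //; apply: ltnW.
  case: a => [|a]; case: b lt => [|b] lt; rewrite ?add0r //.
  by rewrite hP ?mulr0.
- by case: a => [|a] //; rewrite hP //; apply: ltnW.
- by case: b lt => [|b] lt //; rewrite hP ?mulr0.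
- by case: c => [|c] //; rewrite hP ?mulr0 //; apply: ltnW.
Qed.

Lemma act_Pb w D h : Pb D h -> Pb (D + size w) (act gop w h).
Proof.
elim: w => [|k w IH] hP /=; first by rewrite addn0.
by rewrite addnS; apply: gop_Pb; apply: IH.
Qed.

Definition Dp (p : fpoly C) : nat := \sum_(t <- p) size t.2.

Lemma ev_Pb p : Pb (Dp p) (ev gop p (dl (0, 0, 0, 0)%N)).
Proof.
elim: p => [|t p IH] a b c e lt.
  by rewrite ev_nil.
rewrite /ev big_cons -/(ev gop p _ (a, b, c, e)).
rewrite IH; last by apply: leq_ltn_trans lt; rewrite /Dp big_cons leq_addl.
have h0 : Pb 0 (dl (0, 0, 0, 0)%N).
  by move=> a' b' c' e'; case: b' => [|b'] //= _; rewrite /dl !xpair_eqE andbF.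
rewrite (@act_Pb t.2 0 _ h0) ?mulr0 ?addr0 //.
by apply: leq_ltn_trans lt; rewrite /Dp big_cons leq_addr.
Qed.

End Rep.

Section Part1.
Variable C : numClosedFieldType.
Variable q : C.
Hypothesis qn0 : q != 0.
Local Notation dl0 := (dl C (0, 0, 0, 0)%N).
Local Notation G := (gop q).

Definition mcount (w : word) : T4 :=
  (count_mem x12 w, count_mem x21 w, count_mem x22 w, count_mem x11 w).

Lemma mcount_mono m : mcount (mono m) = m.
Proof.
case: m => [[[a b] c] e].
by rewrite /mcount /mono /= !count_cat !count_nseq /= !mul0n !mul1n !addn0 ?add0n.
Qed.

Lemma ev_nf N m : ev G (nf N) dl0 m = \sum_(t <- N) t.1 * (m == t.2)%:R.
Proof.
rewrite /ev /nf big_map; apply: eq_bigr => t _ /=.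
by rewrite act_mono.
Qed.

Lemma nf_zero N : (forall m, ev G (nf N) dl0 m = 0) -> forall w, coef (nf N) w = 0.
Proof.
move=> h w.
rewrite /coef /nf big_map /=.
have e : forall t : C * T4, (mono t.2 == w) = (t.2 == mcount w) && (mono (mcount w) == w).
  move=> t; apply/eqP/andP => [<-|[/eqP -> /eqP //]].
  by rewrite mcount_mono.
rewrite (eq_bigl _ _ e); move: (mcount w) => m.
case: (eqVneq (mono m) w) => [_|_]; last by rewrite big1 // => t; rewrite andbF.
transitivity (ev G (nf N) dl0 m); last exact: h m.
rewrite ev_nf big_mkcond; apply: eq_bigr => t _ /=.
by rewrite andbT eq_sym; case: (m == t.2); rewrite ?mulr1 ?mulr0.
Qed.

Lemma part1 n (B1 : 'M[C]_n) (f : 'I_n -> fpoly C) :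
  (forall a, inIdeal q (vsub (mact B1 f) (xact x21 f) a)) -> forall a, inIdeal q (f a).
Proof.
move=> H.
pose F a := ev G (f a) dl0.
have gA := gop_add q; have gS := gop_scale q; have gR := gop_rel qn0.
have hV : forall a m, \sum_k B1 a k * F k m = opV q (F a) m.
  move=> a m; have := ev_inIdeal gA gS gR dl0 m (H a).
  rewrite /vsub /psub /padd /popp ev_cat ev_pscale ev_mact (ev_xact gA gS) mulN1r.
  by move/eqP; rewrite subr_eq0 => /eqP.
pose D := \sum_a Dp (f a).
have hP : forall a, Pb D (F a).
  move=> a; apply: Pb_mon (ev_Pb q (p := f a)).
  by rewrite /D (bigD1 a) //= leq_addr.
have claim : forall j b a0 c e a, (D < b + j)%N -> F a (a0, b, c, e) = 0.
  elim=> [|j IH] b a0 c e a lt; first by apply: hP; rewrite addn0 in lt.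
  have := hV a (a0, b.+1, c, e).
  rewrite big1 => [|k _]; last by rewrite IH ?mulr0 // addSnnS.
  rewrite /opV => /esym /eqP; rewrite mulf_eq0 expf_eq0 /= expf_eq0 /= (negbTE qn0) !andbF /=.
  by move/eqP.
move=> a.
have Fz : forall m, F a m = 0.
  by case=> [[[a0 b] c] e]; apply: (claim D.+1); rewrite addnS ltnS leq_addl.
have [N eN] := poly_nf qn0 (f a).
have hz : forall m, ev G (nf N) dl0 m = 0.
  by move=> m; rewrite -(ev_E gA gS gR dl0 m eN); exact: Fz.
apply/inIdeal_E; apply: E_coefr eN => w.
by rewrite coef_nil; symmetry; apply: nf_zero.
Qed.

End Part1.

From mathcomp Require Import spectral.

Section Eig.
Variable C : numClosedFieldType.

Lemma eig_exists n d (B1 B2 : 'M[C]_n) (i : 'M[C]_(n, d)) (j : 'M[C]_(d, n))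
  (hcomm : B1 *m B2 - B2 *m B1 + i *m j = 0) (S : 'M[C]_n) :
  (S *m B1^T <= S)%MS -> (S *m B2^T <= S)%MS -> (i^T <= S)%MS -> (\rank S < n)%N ->
  exists phi : 'rV[C]_n, exists b1, exists b2,
    [/\ phi != 0, phi *m B1 = b1 *: phi, phi *m B2 = b2 *: phi & phi *m i = 0].
Proof.
move=> sB1 sB2 si rk.
pose K0 := kermx S^T; pose K := row_base K0.
have KS : K *m S^T = 0.
  by apply/sub_kermxP; rewrite eq_row_base.
have stab : forall B, (S *m B^T <= S)%MS -> (K *m B <= K)%MS.
  move=> B hB; rewrite eq_row_base; apply/sub_kermxP.
  have [D hD] := submxP hB.
  have e : B *m S^T = (S *m B^T)^T by rewrite trmx_mul trmxK.
  by rewrite -mulmxA e hD trmx_mul mulmxA KS mul0mx.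
have Ki : K *m i = 0.
  have [D hD] := submxP si.
  have -> : i = S^T *m D^T by rewrite -trmx_mul -hD trmxK.
  by rewrite mulmxA KS mul0mx.
have Kc : K *m B1 *m B2 = K *m B2 *m B1.
  have e : B1 *m B2 = B2 *m B1 - i *m j.
    rewrite -[LHS]subr0 -hcomm opprD opprB addrA.
    by rewrite [B2 *m B1 - B1 *m B2]addrC addrA subrr add0r.
  by rewrite -(mulmxA K B1 B2) e mulmxBr (mulmxA K i j) Ki mul0mx subr0 mulmxA.
pose A1 := K *m B1 *m pinvmx K; pose A2 := K *m B2 *m pinvmx K.
have A1K : A1 *m K = K *m B1 by rewrite mulmxKpV // stab.
have A2K : A2 *m K = K *m B2 by rewrite mulmxKpV // stab.
have comm : A1 *m A2 = A2 *m A1.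
  apply: (row_free_inj (row_base_free K0)).
  rewrite -(mulmxA A1 A2 K) A2K (mulmxA A1 K B2) A1K -(mulmxA A2 A1 K) A1K.
  by rewrite (mulmxA A2 K B1) A2K Kc.
have n_gt0 : (0 < \rank K0)%N.
  by rewrite /K0 mxrank_ker mxrank_tr subn_gt0.
have [v vn0 /andP[s1 s2]] := common_eigenvector2 n_gt0 comm.
have [b1 hb1] := sub_rVP s1.
have [b2 hb2] := sub_rVP s2.
exists (v *m K), b1, b2; split.
- by rewrite mulmx_free_eq0 // row_base_free.
- by rewrite -mulmxA -A1K mulmxA hb1 scalemxAl.
- by rewrite -mulmxA -A2K mulmxA hb2 scalemxAl.
- by rewrite -mulmxA Ki mulmx0.
Qed.

End Eig.

Section Char.
Variable C : numClosedFieldType.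
Variable q : C.
Variables b1 b2 : C.

Definition chi (k : 'I_4) : C := match val k with 0 => 0 | 1 => 0 | 2 => b1 | _ => b2 end.
Definition gch (k : 'I_4) (h : unit -> C) : unit -> C := fun x => chi k * h x.

Lemma gch_add k f h : gch k (fun x => f x + h x) = (fun x => gch k f x + gch k h x).
Proof. by apply: functional_extensionality => x; rewrite /gch mulrDr. Qed.

Lemma gch_scale k c f : gch k (fun x => c * f x) = (fun x => c * gch k f x).
Proof. by apply: functional_extensionality => x; rewrite /gch mulrCA. Qed.

Lemma gch_rel k f x : ev gch (relI q k) f x = 0.
Proof.
case: k => [[|[|[|[|[|[|k]]]]]] hk] //;
  rewrite /relI /comm2 /psub /padd /popp /= /ev !big_cons big_nil /= /gch /chi /=; ring.
Qed.

End Char.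

Section OnlyIf.
Variable C : numClosedFieldType.
Variable q : C.

Lemma sum_swap n d (phi : 'rV[C]_n) (A : 'M[C]_(n, d)) (Y : 'I_d -> C) :
  \sum_a phi 0 a * (\sum_k A a k * Y k) = \sum_k (phi *m A) 0 k * Y k.
Proof.
under eq_bigr do rewrite mulr_sumr.
rewrite exchange_big /=; apply: eq_bigr => k _.
by rewrite mxE mulr_suml; apply: eq_bigr => a _; rewrite mulrA.
Qed.

Lemma sum_scale_row n (c : C) (phi : 'rV[C]_n) (Y : 'I_n -> C) :
  \sum_k (c *: phi) 0 k * Y k = \sum_k phi 0 k * (c * Y k).
Proof. by apply: eq_bigr => k _; rewrite mxE mulrCA mulrA. Qed.

Lemma part2_onlyif n d (B1 B2 : 'M[C]_n) (i : 'M[C]_(n, d)) (j : 'M[C]_(d, n))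
  (hcomm : B1 *m B2 - B2 *m B1 + i *m j = 0) :
  (forall g : 'I_n -> fpoly C,
      exists h : ('I_n -> fpoly C) * ('I_n -> fpoly C) * ('I_d -> fpoly C),
        forall a, Meq q (betaI B1 B2 i h a) (g a)) -> stable B1 B2 i.
Proof.
move=> Hs [S [sB1 sB2 si rk]].
have [phi [c1 [c2 [phin0 h1 h2 hi]]]] := eig_exists hcomm sB1 sB2 si rk.
have [a0 ha0] : exists a0, phi 0 a0 != 0.
  case: (pickP (fun a => phi 0 a != 0)) => [a0 ha|h0]; first by exists a0.
  move/negP: phin0; case; apply/eqP/rowP => a; rewrite mxE.
  by move: (h0 a) => /= /negbFE /eqP.
pose g := fun a : 'I_n => if a == a0 then pword C [::] else [::].
have [h Hh] := Hs g.
have gA := gch_add c1 c2; have gS := gch_scale c1 c2; have gR := gch_rel q c1 c2.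
pose X p := ev (gch c1 c2) p (fun _ => 1) tt.
have hX : forall a, X (betaI B1 B2 i h a) = X (g a).
  by move=> a; apply: (ev_E gA gS gR); apply/Meq_E.
have eq1 : \sum_a phi 0 a * X (g a) = phi 0 a0.
  rewrite (bigD1 a0) //= big1 => [|a ha]; last by rewrite /X /g (negbTE ha) ev_nil mulr0.
  by rewrite /X /g eqxx ev_pword /= mulr1 addr0.
have eq2 : \sum_a phi 0 a * X (betaI B1 B2 i h a) = 0.
  pose Y1 k := X (h.1.1 k); pose Y2 k := X (h.1.2 k); pose Y3 k := X (h.2 k).
  have e : forall a, X (betaI B1 B2 i h a) =
     c2 * Y1 a - \sum_k B2 a k * Y1 k + (\sum_k B1 a k * Y2 k - c1 * Y2 a) + \sum_k i a k * Y3 k.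
    move=> a; rewrite /X /betaI !ev_vadd !ev_vsub !(ev_xact gA gS) !ev_mact.
    by rewrite /gch /chi /=.
  under eq_bigr do rewrite e !mulrDr !mulrN.
  rewrite !big_split !sumrN /= !sum_swap h1 h2 hi.
  rewrite [X in _ + X = 0]big1 => [|k _]; last by rewrite mxE mul0r.
  by rewrite !sum_scale_row !subrr !addr0.
by move: ha0; rewrite -eq1 -(eq_bigr _ (fun a _ => congr1 _ (hX a))) eq2 eqxx.
Qed.
End OnlyIf.

Section Surj.
Variable C : numClosedFieldType.
Variable q : C.
Variables (n d : nat) (B1 B2 : 'M[C]_n) (i : 'M[C]_(n, d)).
Local Notation E := (E q).

Definition zeros k : 'I_k -> fpoly C := fun _ => [::].
Arguments zeros : clear implicits.

Lemma headc_cat k (p r : fpoly C) w : headc k (coef (p ++ r)) w = headc k (coef p) w + headc k (coef r) w.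
Proof. by case: w => [|k' w] /=; [rewrite addr0 | case: ifP; rewrite ?coef_cat ?addr0]. Qed.

Lemma headc_pscale k c (p : fpoly C) w : headc k (coef (pscale c p)) w = c * headc k (coef p) w.
Proof. by case: w => [|k' w] /=; [rewrite mulr0 | case: ifP; rewrite ?coef_pscale ?mulr0]. Qed.

Lemma headc_nil k w : headc k (coef ([::] : fpoly C)) w = 0.
Proof. by case: w => [|k' w] //=; case: ifP; rewrite ?coef_nil. Qed.

Lemma coef_betaI h a w : coef (betaI B1 B2 i h a) w =
  headc x22 (coef (h.1.1 a)) w - \sum_k B2 a k * coef (h.1.1 k) w
  + (\sum_k B1 a k * coef (h.1.2 k) w - headc x21 (coef (h.1.2 a)) w)
  + \sum_k i a k * coef (h.2 k) w.
Proof.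
rewrite /betaI /vadd /vsub /padd coef_cat coef_cat !coef_psub !coef_mact /xact !coef_pmulX.
done.
Qed.

Lemma sum_cat_coef m (A : 'M[C]_(n, m)) (f1 f2 : 'I_m -> fpoly C) a w :
  \sum_k A a k * coef (f1 k ++ f2 k) w =
  \sum_k A a k * coef (f1 k) w + \sum_k A a k * coef (f2 k) w.
Proof. by rewrite -big_split; apply: eq_bigr => k _; rewrite coef_cat mulrDr. Qed.

Definition Im (g : 'I_n -> fpoly C) :=
  exists h, forall a, E (betaI B1 B2 i h a) (g a).

Lemma Im_E g g' : Im g -> (forall a, E (g a) (g' a)) -> Im g'.
Proof. by move=> [h hh] e; exists h => a; apply: E_trans (hh a) (e a). Qed.

Lemma Im_coef g g' : Im g -> (forall a w, coef (g a) w = coef (g' a) w) -> Im g'.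
Proof. by move=> hg e; apply: Im_E hg _ => a; apply: E_coef. Qed.

Lemma Im_beta h : Im (betaI B1 B2 i h).
Proof. by exists h => a; exact: E_refl. Qed.

Lemma Im_add g1 g2 : Im g1 -> Im g2 -> Im (vadd g1 g2).
Proof.
move=> [h1 e1] [h2 e2].
exists (vadd h1.1.1 h2.1.1, vadd h1.1.2 h2.1.2, vadd h1.2 h2.2) => a.
apply: E_trans (E_add (e1 a) (e2 a)).
apply: E_coef => w; rewrite coef_cat !coef_betaI /= /vadd /padd !headc_cat !sum_cat_coef.
ring.
Qed.

Lemma sum_scale_coef m (A : 'M[C]_(n, m)) (f : 'I_m -> fpoly C) c a w :
  \sum_k A a k * coef (pscale c (f k)) w = c * \sum_k A a k * coef (f k) w.
Proof. by rewrite mulr_sumr; apply: eq_bigr => k _; rewrite coef_pscale mulrCA. Qed.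

Lemma sum_nil_coef m (A : 'M[C]_(n, m)) a w :
  \sum_k A a k * coef (zeros m k) w = 0.
Proof. by rewrite big1 // => k _; rewrite coef_nil mulr0. Qed.

Definition vscale k c (f : 'I_k -> fpoly C) : 'I_k -> fpoly C := fun a => pscale c (f a).

Lemma Im_scale c g : Im g -> Im (vscale c g).
Proof.
move=> [h e]; exists (vscale c h.1.1, vscale c h.1.2, vscale c h.2) => a.
apply: E_trans (E_scale c (e a)).
apply: E_coef => w; rewrite coef_pscale !coef_betaI /= /vscale !headc_pscale !sum_scale_coef.
ring.
Qed.

Lemma Im0 : Im (zeros n).
Proof.
exists (zeros n, zeros n, zeros d) => a; apply: E_coef => w.
rewrite coef_betaI /= !sum_nil_coef !headc_nil coef_nil; ring.
Qed.

Definition tens (v : 'I_n -> C) (m : fpoly C) : 'I_n -> fpoly C := fun a => pscale (v a) m.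
Definition U (v : 'I_n -> C) := forall m, Im (tens v m).

Lemma U_ext v v' : (forall a, v a = v' a) -> U v -> U v'.
Proof.
move=> e hv m; refine (Im_coef (hv m) _) => a w.
by rewrite /tens !coef_pscale e.
Qed.

Lemma U_add v1 v2 : U v1 -> U v2 -> U (fun a => v1 a + v2 a).
Proof.
move=> h1 h2 m; refine (Im_coef (Im_add (h1 m) (h2 m)) _) => a w.
by rewrite /vadd /padd /tens coef_cat !coef_pscale mulrDl.
Qed.

Lemma U_scale c v : U v -> U (fun a => c * v a).
Proof.
move=> h m; refine (Im_coef (Im_scale c (h m)) _) => a w.
by rewrite /vscale /tens !coef_pscale mulrA.
Qed.

Lemma U_0 : U (fun _ => 0).
Proof.
move=> m; refine (Im_coef Im0 _) => a w.
by rewrite /tens coef_pscale coef_nil mul0r.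
Qed.

Lemma U_icol k : U (fun a => i a k).
Proof.
move=> m; exists (zeros n, zeros n, fun b => if b == k then m else [::]) => a.
apply: E_coef => w; rewrite coef_betaI /= !sum_nil_coef !headc_nil /tens coef_pscale.
rewrite (bigD1 k) //= eqxx big1 => [|b /negbTE ->]; last by rewrite coef_nil mulr0.
ring.
Qed.

Lemma U_B1 v : U v -> U (fun a => \sum_b B1 a b * v b).
Proof.
move=> hv m.
refine (Im_coef (Im_add (Im_beta (zeros n, tens v m, zeros d)) (hv (pmul (pX C x21) m))) _) => a w.
rewrite /vadd /padd coef_cat coef_betaI /= !sum_nil_coef !headc_nil /tens !coef_pscale.
rewrite headc_pscale coef_pmulX mulr_suml.
under eq_bigr do rewrite coef_pscale mulrA.
ring.
Qed.

Lemma U_B2 v : U v -> U (fun a => \sum_b B2 a b * v b).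
Proof.
move=> hv m.
refine (Im_coef (Im_add (hv (pmul (pX C x22) m)) (Im_scale (-1) (Im_beta (tens v m, zeros n, zeros d)))) _) => a w.
rewrite /vadd /padd /vscale coef_cat coef_pscale coef_betaI /= !sum_nil_coef !headc_nil /tens !coef_pscale.
rewrite headc_pscale coef_pmulX mulr_suml.
under eq_bigr do rewrite coef_pscale mulrA.
ring.
Qed.


Definition U' (r : 'rV[C]_n) := U (fun a => r 0 a).

Lemma U'_add r1 r2 : U' r1 -> U' r2 -> U' (r1 + r2).
Proof. by move=> h1 h2; apply: U_ext (U_add h1 h2) => a; rewrite mxE. Qed.

Lemma U'_sub m (A : 'M[C]_(m, n)) r : (forall k, U' (row k A)) -> (r <= A)%MS -> U' r.
Proof.
move=> hA /submxP [D ->]; rewrite mulmx_sum_row.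
elim/big_ind: _ => [|x y hx hy|k _].
- by apply: U_ext U_0 => a; rewrite mxE.
- exact: U'_add.
- by apply: U_ext (U_scale (D 0 k) (hA k)) => a; rewrite !mxE.
Qed.

Lemma U'_B1 r : U' r -> U' (r *m B1^T).
Proof.
move=> h; apply: U_ext (U_B1 h) => a; rewrite !mxE.
by apply: eq_bigr => b _; rewrite mxE mulrC.
Qed.

Lemma U'_B2 r : U' r -> U' (r *m B2^T).
Proof.
move=> h; apply: U_ext (U_B2 h) => a; rewrite !mxE.
by apply: eq_bigr => b _; rewrite mxE mulrC.
Qed.

Definition Sk k : 'M[C]_n :=
  iter k (fun S : 'M[C]_n => (S + (S *m B1^T + S *m B2^T))%MS) (<<i^T>>%MS).

Lemma U'_Sk k r : (r <= Sk k)%MS -> U' r.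
Proof.
elim: k r => [|k IH] r hr.
  rewrite /Sk /= genmxE in hr; apply: U'_sub hr => k.
  by apply: U_ext (U_icol k) => a; rewrite !mxE.
move/sub_addsmxP: hr => [[u1 u2] ->] /=; apply: U'_add.
  by apply: IH; apply: submxMl.
have : (u2 *m (Sk k *m B1^T + Sk k *m B2^T)%MS <= (Sk k *m B1^T + Sk k *m B2^T)%MS)%MS.
  exact: submxMl.
move/sub_addsmxP => [[w1 w2] ->] /=; apply: U'_add; rewrite mulmxA.
  by apply: U'_B1; apply: IH; apply: submxMl.
by apply: U'_B2; apply: IH; apply: submxMl.
Qed.

Lemma Sk_inc k : (Sk k <= Sk k.+1)%MS.
Proof. exact: addsmxSl. Qed.

Lemma Sk_i k : (i^T <= Sk k)%MS.
Proof.
elim: k => [|k IH]; first by rewrite /Sk /= genmxE.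
exact: submx_trans IH (Sk_inc k).
Qed.

Lemma exists_stab : exists k, (Sk k.+1 <= Sk k)%MS.
Proof.
case: (boolP [exists k : 'I_n.+1, (Sk k.+1 <= Sk k)%MS]) => [/existsP [k hk]|H].
  by exists k.
move/existsPn: H => H.
have claim : forall k, (k <= n.+1)%N -> (k <= \rank (Sk k))%N.
  elim=> // k IH hk.
  have hlt : (Sk k < Sk k.+1)%MS.
    by rewrite ltmxE Sk_inc /=; exact: (H (Ordinal hk)).
  by apply: leq_ltn_trans (IH (ltnW hk)) (rank_ltmx hlt).
have := claim n.+1 (leqnn _).
by rewrite leqNgt ltnS rank_leq_col.
Qed.

Lemma part2_if : stable B1 B2 i -> forall g, Im g.
Proof.
move=> Hst g.
have [k hk] := exists_stab.
have s1 : (Sk k *m B1^T <= Sk k)%MS.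
  apply: submx_trans hk; apply: submx_trans (addsmxSr _ _); exact: addsmxSl.
have s2 : (Sk k *m B2^T <= Sk k)%MS.
  apply: submx_trans hk; apply: submx_trans (addsmxSr _ _); exact: addsmxSr.
have full : row_full (Sk k).
  rewrite /row_full eqn_leq rank_leq_col /= leqNgt; apply/negP => lt.
  by apply: Hst; exists (Sk k); split => //; exact: Sk_i.
have hcol : forall b, U (fun a => (1%:M : 'M[C]_n) a b).
  move=> b; have := U'_Sk (submx_full (row b 1%:M) full).
  by apply: U_ext => a; rewrite !mxE eq_sym.
have hl : forall l, Im (fun a => flatten [seq pscale ((1%:M : 'M[C]_n) a k) (g k) | k <- l]).
  elim=> [|b l IH]; first exact: Im0.
  exact: (Im_add (hcol b (g b)) IH).
refine (Im_coef (hl (enum 'I_n)) _) => a w.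
rewrite -/(mact 1%:M g a) coef_mact (bigD1 a) //= big1 => [|b hb]; last first.
  by rewrite mxE eq_sym (negbTE hb) mul0r.
by rewrite mxE eqxx mul1r addr0.
Qed.

End Surj.

Unset Implicit Arguments.

Theorem proposition3p9 (C : numClosedFieldType) (q : C) (hq : 0 < q)
  (n d : nat) (B1 B2 : 'M[C]_n) (i : 'M[C]_(n, d)) (j : 'M[C]_(d, n))
  (hcomm : B1 *m B2 - B2 *m B1 + i *m j = 0)
  (hmom : B1 *m dag B1 - dag B1 *m B1 + (B2 *m dag B2 - dag B2 *m B2)
          + i *m dag i - dag j *m j = 0) :
  (forall f : 'I_n -> fpoly C,
      (forall a, inIdeal q ((alphaI B1 B2 j f).1.1 a)) ->
      (forall a, inIdeal q ((alphaI B1 B2 j f).1.2 a)) ->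
      (forall b, inIdeal q ((alphaI B1 B2 j f).2 b)) ->
      forall a, inIdeal q (f a))
  /\
  ((forall g : 'I_n -> fpoly C,
      exists h : ('I_n -> fpoly C) * ('I_n -> fpoly C) * ('I_d -> fpoly C),
        forall a, Meq q (betaI B1 B2 i h a) (g a))
   <-> stable B1 B2 i).
Proof.
have qn0 : q != 0 := lt0r_neq0 hq.
split.
  by move=> f H1 _ _; exact: (part1 qn0 H1).
split; first exact: part2_onlyif hcomm.
move=> Hst g; have [h hh] := part2_if q Hst g.
by exists h => a; apply/Meq_E.
Qed.
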